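(* In the setting below, suppose $X_0$ is almost surely constant, $\mathbb{P}(A_1\ne a_1)>0$, and for some $s\in\{1,\dots,t\}$ we have $\mathbb{P}(X_s(A_{1:s})=x_s)=0$ for all $x_s\in\mathcal{X}_s$. Then measurable $\underline g,\overline g:\mathcal{X}_{0:t}\to\mathbb{R}$ are permissible bounds only if they are trivial, i.e. only if $\underline g(X_{0:t}(a_{1:t}))\le\underline y(X_{0:t}(a_{1:t}))$ and $\overline g(X_{0:t}(a_{1:t}))\ge\overline y(X_{0:t}(a_{1:t}))$ almost surely.
   Context: Horizon $T\ge1$, $\mathcal{X}_t=\mathbb{R}^{d_t}$, finite action spaces $\mathcal{A}_t$; potential outcomes $X_0$, $X_r(a'_{1:r})\in\mathcal{X}_r$, random actions $A_{1:T}$ ($A_r\in\mathcal{A}_r$), and real-valued potential outcomes $Y(a'_{1:t})$, all defined jointly; $X_{0:t}(a_{1:t})=(X_0,X_1(a_1),\dots,X_t(a_{1:t}))$, and quantities evaluated at $A$ denote the potential outcome indexed by the realized actions. Fix $t\in\{1,\dots,T\}$, $a_{1:t}\in\mathcal{A}_{1:t}$, and measurable $\underline y,\overline y:\mathcal{X}_{0:t}\to\mathbb{R}$ with $\underline y(X_{0:t}(a_{1:t}))\le Y(a_{1:t})\le\overline y(X_{0:t}(a_{1:t}))$ almost surely. A pair $\underline g,\overline g:\mathcal{X}_{0:t}\to\mathbb{R}$ is permissible if, for every family of potential outcomes and actions $(\tilde X_{0:T}(a'_{1:T}),\tilde Y(a'_{1:t}),\tilde A_{1:T}:a'_{1:T}\in\mathcal{A}_{1:T})$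 with $\mathrm{Law}[\tilde X_{0:T}(\tilde A_{1:T}),\tilde A_{1:T},\tilde Y(\tilde A_{1:t})]=\mathrm{Law}[X_{0:T}(A_{1:T}),A_{1:T},Y(A_{1:t})]$ and $\underline y(\tilde X_{0:t}(a_{1:t}))\le\tilde Y(a_{1:t})\le\overline y(\tilde X_{0:t}(a_{1:t}))$ a.s., it holds that $\underline g(\tilde X_{0:t}(a_{1:t}))\le\mathbb{E}[\tilde Y(a_{1:t})\mid\tilde X_{0:t}(a_{1:t})]\le\overline g(\tilde X_{0:t}(a_{1:t}))$ almost surely. *)

(* Defs.v *)
From HB Require Import structures.
From mathcomp Require Import all_boot all_algebra.
From mathcomp Require Import all_classical all_reals all_analysis.

Set Implicit Arguments.
Unset Strict Implicit.
Unset Printing Implicit Defensive.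

Import GRing.Theory Num.Theory.
Local Open Scope classical_set_scope.
Local Open Scope ring_scope.

(* Conventions:
   - time is a nat; actions are encoded as natural numbers, the action space
     at time r being the finite set [Aset r : seq nat];
   - an action sequence is a map [alpha : nat -> nat], [alpha r] being the
     action at time r (r >= 1; [alpha 0] is ignored);
   - X_r(a'_{1:r}) is [X r (pre a' r)], with values in R^{dims r}
     represented as [(dims r).-tuple R] (product Borel sigma-algebra);
   - X_{0:t} lives in R^{d_0} x ... x R^{d_t}, represented by the
     concatenation in R^{d_0 + ... + d_t}. *)

Definition pre (alpha : nat -> nat) (r : nat) : r.-tuple nat :=
  [tuple alpha i.+1 | i < r].

Fixpoint dsum (dims : nat -> nat) (t : nat) : nat :=
  match t with
  | 0 => dims 0
  | t'.+1 => (dsum dims t' + dims t'.+1)%N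
  end.

Fixpoint traj (R : Type) (dims : nat -> nat) (Omega : Type)
    (X : forall r, r.-tuple nat -> Omega -> (dims r).-tuple R)
    (alpha : nat -> nat) (t : nat) (w : Omega) : (dsum dims t).-tuple R :=
  match t return (dsum dims t).-tuple R with
  | 0 => X 0 (pre alpha 0) w
  | t'.+1 => cat_tuple (traj X alpha t' w) (X t'.+1 (pre alpha t'.+1) w)
  end.

Definition obs (R : Type) (dims : nat -> nat) (Omega : Type)
    (X : forall r, r.-tuple nat -> Omega -> (dims r).-tuple R)
    (A : Omega -> nat -> nat) (Y : forall t, t.-tuple nat -> Omega -> R)
    (T t : nat) (w : Omega) : (T.-tuple nat * (dsum dims T).-tuple R * R) :=
  (pre (A w) T, traj X (A w) T w, Y t (pre (A w) t) w).

Definition po_measurable (R : realType) (dims : nat -> nat)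
    (d : measure_display) (Omega : measurableType d)
    (X : forall r, r.-tuple nat -> Omega -> (dims r).-tuple R)
    (A : Omega -> nat -> nat) (Y : forall t, t.-tuple nat -> Omega -> R) :=
  [/\ (forall r (al : r.-tuple nat), measurable_fun setT (X r al)),
      (forall r, measurable_fun setT (fun w => A w r)) &
      (forall t (al : t.-tuple nat), measurable_fun setT (Y t al))].

Definition actions_in (Omega : Type) (Aset : nat -> seq nat) (T : nat)
    (A : Omega -> nat -> nat) :=
  forall w r, (1 <= r <= T)%N -> A w r \in Aset r.

Definition same_law (R : realType) (dV : measure_display) (V : measurableType dV)
    (d : measure_display) (Omega : measurableType d) (P : probability Omega R)
    (d' : measure_display) (Omega' : measurableType d') (P' : probability Omega' R)
    (Z : Omega -> V) (Z' : Omega' -> V) :=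
  forall B : set V, measurable B -> P (Z @^-1` B) = P' (Z' @^-1` B).

Definition cexp_version (R : realType) (d : measure_display)
    (Omega : measurableType d) (P : probability Omega R)
    (dV : measure_display) (V : measurableType dV)
    (Y : Omega -> R) (Z : Omega -> V) (h : V -> R) :=
  [/\ measurable_fun setT h,
      P.-integrable setT (EFin \o Y),
      P.-integrable setT (EFin \o (h \o Z)) &
      forall B : set V, measurable B ->
        (\int[P]_(w in Z @^-1` B) (Y w)%:E =
         \int[P]_(w in Z @^-1` B) (h (Z w))%:E)%E].

Definition permissible (R : realType) (dims : nat -> nat) (T t : nat)
    (Aset : nat -> seq nat) (a : nat -> nat)
    (d : measure_display) (Omega : measurableType d) (P : probability Omega R)
    (X : forall r, r.-tuple nat -> Omega -> (dims r).-tuple R)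
    (A : Omega -> nat -> nat) (Y : forall t, t.-tuple nat -> Omega -> R)
    (ylo yup glo gup : (dsum dims t).-tuple R -> R) : Prop :=
  forall (d' : measure_display) (Omega' : measurableType d')
         (P' : probability Omega' R)
         (X' : forall r, r.-tuple nat -> Omega' -> (dims r).-tuple R)
         (A' : Omega' -> nat -> nat) (Y' : forall t, t.-tuple nat -> Omega' -> R),
    po_measurable X' A' Y' ->
    actions_in Aset T A' ->
    same_law P P' (obs X A Y T t) (obs X' A' Y' T t) ->
    {ae P', forall w, ylo (traj X' a t w) <= Y' t (pre a t) w
                      <= yup (traj X' a t w)} ->
    forall h : (dsum dims t).-tuple R -> R,
      cexp_version P' (Y' t (pre a t)) (traj X' a t) h ->
      {ae P', forall w, glo (traj X' a t w) <= h (traj X' a t w)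
                        <= gup (traj X' a t w)}.

(* Main.v *)
Require Import Defs.
From HB Require Import structures.
From mathcomp Require Import all_boot all_order all_algebra.
From mathcomp Require Import all_classical all_reals all_analysis.
From mathcomp Require Import measurable_realfun.
Import Order.TTheory GRing.Theory Num.Theory.
Local Open Scope classical_set_scope.
Local Open Scope ring_scope.

Lemma mbool d (Om : measurableType d) (f : Om -> bool) :
  measurable [set w | f w] -> measurable_fun setT f.
Proof.
move=> mf _ B _; rewrite setTI.
have mf' : measurable [set w | ~~ f w].
  rewrite (_ : [set w | ~~ f w] = ~` [set w | f w]); first exact: measurableC.
  by apply/seteqP; split => w /=; case: (f w).
have -> : f @^-1` B = ((if `[< B true >] then [set w | f w] else set0) `|`
                       (if `[< B false >] then [set w | ~~ f w] else set0)).
  apply/seteqP; split => w /=.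
    move=> Bw; rewrite /setU /=; case E: (f w) in Bw *.
      by left; rewrite asboolT //= E.
    by right; rewrite asboolT //= E.
  rewrite /setU /=; case; case: asboolP => //= Bb; case E: (f w) => //.
apply: measurableU; case: asboolP => _ //.
Qed.

Lemma nat_set1 (k : nat) : measurable [set k].
Proof. by []. Qed.

Lemma tuple_set1 (R : realType) n (x : n.-tuple R) : measurable [set x].
Proof.
have -> : [set x] = \bigcap_(i in [set: 'I_n]) ((@tnth n R)^~ i @^-1` [set tnth x i]).
  apply/seteqP; split => [y -> i _ //|y /= H].
  by apply: eq_from_tnth => i; apply: H.
apply: fin_bigcap_measurable; first exact: finite_finset.
move=> i _.
have := @measurable_tnth _ R n i measurableT [set tnth x i] (measurable_set1 _).
by rewrite setTI.
Qed.

Lemma measurable_cat d (Om : measurableType d) (R : realType) m n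
  (f : Om -> m.-tuple R) (g : Om -> n.-tuple R) :
  measurable_fun setT f -> measurable_fun setT g ->
  measurable_fun setT (fun w => cat_tuple (f w) (g w)).
Proof.
move=> mf mg; apply/measurable_fun_tnthP => i.
case: (splitP i) => [j|k] Hi.
- have -> : (@tnth _ R ^~ i \o (fun w => cat_tuple (f w) (g w))) = (fun w => tnth (f w) j).
    apply/funext => w /=.
    by rewrite (_ : i = lshift n j) ?tnth_lshift //; apply: val_inj.
  exact: (measurable_fun_tnthP f).1 mf j.
- have -> : (@tnth _ R ^~ i \o (fun w => cat_tuple (f w) (g w))) = (fun w => tnth (g w) k).
    apply/funext => w /=.
    by rewrite (_ : i = rshift m k) ?tnth_rshift //; apply: val_inj.
  exact: (measurable_fun_tnthP g).1 mg k.
Qed.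


Lemma pre_tnth (alpha : nat -> nat) r (i : 'I_r) : tnth (pre alpha r) i = alpha i.+1.
Proof. by rewrite /pre tnth_mktuple. Qed.

Lemma pre_eqP (alpha beta : nat -> nat) r :
  pre alpha r = pre beta r <-> (forall i, (i < r)%N -> alpha i.+1 = beta i.+1).
Proof.
split.
- move=> E i ir; have := congr1 (fun u => tnth u (Ordinal ir)) E.
  by rewrite !pre_tnth.
- by move=> H; apply: eq_from_tnth => i; rewrite !pre_tnth H.
Qed.

Lemma pre_prefix (alpha beta : nat -> nat) r s :
  (s <= r)%N -> pre alpha r = pre beta r -> pre alpha s = pre beta s.
Proof.
move=> sr /pre_eqP H; apply/pre_eqP => i ir; apply: H.
exact: leq_trans ir sr.
Qed.

Lemma pre_eq1 (alpha beta : nat -> nat) r :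
  (0 < r)%N -> pre alpha r = pre beta r -> alpha 1%N = beta 1%N.
Proof. by move=> r0 /pre_eqP H; apply: H. Qed.

Section traj.
Context (R : eqType) (dims : nat -> nat) (Om Om' : Type)
  (X : forall r, r.-tuple nat -> Om -> (dims r).-tuple R)
  (X' : forall r, r.-tuple nat -> Om' -> (dims r).-tuple R).

Lemma traj_ext alpha beta w w' t :
  (forall r, (r <= t)%N -> X r (pre alpha r) w = X' r (pre beta r) w') ->
  traj X alpha t w = traj X' beta t w'.
Proof.
elim: t => [|t IH] H /=; first exact: H.
rewrite IH ?H // => r rt; apply: H; exact: leqW.
Qed.

Lemma traj_inj alpha beta w w' t :
  traj X alpha t w = traj X' beta t w' ->
  forall s, (s <= t)%N -> X s (pre alpha s) w = X' s (pre beta s) w'.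
Proof.
elim: t => [|t IH] /= E s st.
  by move: st; rewrite leqn0 => /eqP ->.
move: (congr1 (@tval _ _) E) => /= /eqP; rewrite eqseq_cat ?size_tuple //.
case/andP => /eqP E1 /eqP E2.
move: st; rewrite leq_eqVlt => /orP[/eqP -> | st].
  exact: val_inj.
apply: IH => //; exact: val_inj.
Qed.

End traj.

Lemma measurable_traj (R : realType) (dims : nat -> nat) d (Om : measurableType d)
  (X : forall r, r.-tuple nat -> Om -> (dims r).-tuple R) alpha t :
  (forall r (al : r.-tuple nat), measurable_fun setT (X r al)) ->
  measurable_fun setT (traj X alpha t).
Proof.
move=> mX; elim: t => [|t IH] /=; first exact: mX.
exact: measurable_cat.
Qed.

Lemma measurable_pre_eq d (Om : measurableType d) (A : Om -> nat -> nat) k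
  (al : k.-tuple nat) :
  (forall r, measurable_fun setT (fun w => A w r)) ->
  measurable [set w | pre (A w) k = al].
Proof.
move=> mA.
have -> : [set w | pre (A w) k = al] =
    \bigcap_(i in [set: 'I_k]) ((fun w => A w i.+1) @^-1` [set tnth al i]).
  apply/seteqP; split => [w /= E i _|w /= H].
    by rewrite -E pre_tnth.
  by apply: eq_from_tnth => i; rewrite pre_tnth; apply: H.
apply: fin_bigcap_measurable; first exact: finite_finset.
move=> i _; have := mA i.+1 measurableT [set tnth al i] (nat_set1 _).
by rewrite setTI.
Qed.

Lemma measurable_eqf d (Om : measurableType d) (R : realType) n
  (f : Om -> n.-tuple R) (x : n.-tuple R) :
  measurable_fun setT f -> measurable [set w | f w = x].
Proof.
move=> mf; have := mf measurableT [set x] (@tuple_set1 R n x).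
by rewrite setTI.
Qed.


Section cexp_charge.
Context (R : realType) (d : measure_display) (Omega : measurableType d)
  (P : probability Omega R) (dV : measure_display) (V : measurableType dV)
  (Z : Omega -> V) (Y : Omega -> R).
Hypothesis mZ : measurable_fun setT Z.
Hypothesis intY : P.-integrable setT (EFin \o Y).
Local Open Scope ereal_scope.

Definition cnu (B : set V) := induced_charge intY (Z @^-1` B).

Let cnu0 : cnu set0 = 0.
Proof. by rewrite /cnu preimage_set0 charge0. Qed.

Let cnu_finite B : measurable B -> cnu B \is a fin_num.
Proof.
move=> mB; apply: fin_num_measure.
by rewrite -[X in measurable X]setTI; exact: mZ.
Qed.

Let cnu_sigma_additive : semi_sigma_additive cnu.
Proof.
move=> F mF tF mUF; rewrite /cnu preimage_bigcup.
apply: charge_semi_sigma_additive.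
- by move=> n; rewrite -[X in measurable X]setTI; exact: mZ.
- apply/trivIsetP => /= i j _ _ ij; rewrite -preimage_setI.
  by move/trivIsetP : tF => /(_ _ _ _ _ ij) ->//; rewrite preimage_set0.
- by rewrite -preimage_bigcup -[X in measurable X]setTI; exact: mZ.
Qed.

HB.instance Definition _ := isCharge.Build _ _ _ cnu
  cnu0 cnu_finite cnu_sigma_additive.

Lemma cexp_exists : exists h, cexp_version P Y Z h.
Proof.
pose Zm : {mfun Omega >-> V} :=
  MeasurableFun.Pack (MeasurableFun.Class (isMeasurableFun.Build _ _ _ _ _ mZ)).
pose mu := distribution P Zm.
pose nu := cnu.
have numu : nu `<< mu.
  apply/null_content_dominatesP => B mB muB0.
  rewrite /nu /cnu /induced_charge.
  apply: null_set_integral => //.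
  - by have := mZ measurableT _ mB; rewrite setTI.
  - exact: (measurable_funS measurableT (subsetT _) (measurable_int P intY)).
pose f : V -> \bar R := @Radon_Nikodym _ V R nu mu.
have intf : mu.-integrable setT f := @Radon_Nikodym_integrable _ _ R nu mu numu.
have fin x : f x \is a fin_num := @Radon_Nikodym_fin_num _ _ R nu mu x numu.
have rnE A : measurable A -> nu A = (\int[mu]_(x in A) f x)%E.
  by move=> mA; exact: (@Radon_Nikodym_integral _ _ R nu mu A numu mA).
have mf : measurable_fun [set: V] f by exact: (measurable_int mu intf).
have ff : (EFin \o fine \o f) = f.
  by apply/funext => x /=; rewrite fineK// fin.
have intfZ : P.-integrable setT (f \o Zm).
  apply/integrableP; split; first exact: measurableT_comp.
  move/integrableP: intf => [_].
  rewrite ge0_integral_pushforward//=.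
  exact: measurableT_comp.
exists (fine \o f); split.
- exact: measurableT_comp.
- exact: intY.
- rewrite (_ : _ \o _ = f \o Zm); last by apply/funext => w /=; rewrite fineK// fin.
  exact: intfZ.
- move=> B mB.
  have -> : (\int[P]_(w in Z @^-1` B) (Y w)%:E)%E = nu B by [].
  rewrite rnE//.
  rewrite (_ : (fun w => ((fine \o f) (Z w))%:E) = f \o Zm); last first.
    by apply/funext => w /=; rewrite fineK// fin.
  rewrite integral_pushforward//.
  apply: integrableS intfZ => //.
  by have := mZ measurableT _ mB; rewrite setTI.
Qed.

End cexp_charge.


Lemma nat_mfun d (Om : measurableType d) (f : Om -> nat) (g : nat -> bool) :
  measurable_fun setT f -> measurable_fun setT (fun w => g (f w)).
Proof.
move=> mf; apply: (measurableT_comp (f := g)) => //.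
Qed.

Lemma measurable_obs (R : realType) (dims : nat -> nat) d (Om : measurableType d)
  (X : forall r, r.-tuple nat -> Om -> (dims r).-tuple R) (A : Om -> nat -> nat) s x :
  (forall r (al : r.-tuple nat), measurable_fun setT (X r al)) ->
  (forall r, measurable_fun setT (fun w => A w r)) ->
  measurable [set w | X s (pre (A w) s) w = x].
Proof.
move=> mX mA.
have -> : [set w | X s (pre (A w) s) w = x] = \bigcup_n
    (if @unpickle (s.-tuple nat) n is Some al then
       [set w | pre (A w) s = al] `&` [set w | X s al w = x] else set0).
  apply/seteqP; split => [w /= e| w [n _]].
    by exists (pickle (pre (A w) s)) => //; rewrite pickleK.
  by case: unpickle => [al|//] [/= e1 e2]; rewrite e1.
apply: bigcupT_measurable => n; case: unpickle => [al|//].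
apply: measurableI; [exact: measurable_pre_eq| exact: measurable_eqf].
Qed.

Section key.
Context (R : realType) (dims : nat -> nat) (T t : nat)
    (Aset : nat -> seq nat) (a : nat -> nat)
    (d : measure_display) (Omega : measurableType d) (P : probability Omega R)
    (X : forall r, r.-tuple nat -> Omega -> (dims r).-tuple R)
    (A : Omega -> nat -> nat) (Y : forall t, t.-tuple nat -> Omega -> R)
    (ylo yup glo gup : (dsum dims t).-tuple R -> R).
Hypothesis ht : (1 <= t <= T)%N.
Hypothesis mXAY : po_measurable X A Y.
Hypothesis hA : actions_in Aset T A.
Hypothesis hb : {ae P, forall w, ylo (traj X a t w) <= Y t (pre a t) w <= yup (traj X a t w)}.
Hypothesis intY : P.-integrable setT (EFin \o Y t (pre a t)).
Variable c : (dims 0).-tuple R.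
Hypothesis hc : {ae P, forall w, X 0%N (pre a 0) w = c}.
Hypothesis hA1 : (0 < P [set w | (A w 1 != a 1)%N])%E.
Variable s : nat.
Hypothesis hs : (1 <= s <= t)%N.
Hypothesis hatom : forall x : (dims s).-tuple R, P [set w | X s (pre (A w) s) w = x] = 0%E.
Hypothesis hperm : permissible T Aset a P X A Y ylo yup glo gup.

Lemma key (w0 : Omega) (v : R) : X 0%N (pre a 0) w0 = c ->
  ylo (traj X a t w0) <= v <= yup (traj X a t w0) ->
  glo (traj X a t w0) <= v <= gup (traj X a t w0).
Proof.
move=> hc0 hv.
case: mXAY => mX mA mY.
have t0 : (0 < t)%N by case/andP: ht.
set z0 := traj X a t w0.
pose X' := fun r (al : r.-tuple nat) w =>
  if [&& (0 < r)%N, A w 1 != a 1 & al == pre a r] then X r al w0 else X r al w.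
have hX'mod w : A w 1 != a 1 -> X 0%N (pre a 0) w = c -> traj X' a t w = z0.
  move=> ne e; apply: traj_ext => -[|r] _ /=; rewrite /X' /=.
    by rewrite e hc0.
  by rewrite ne eqxx.
have hX'unmod w : A w 1 = a 1 -> traj X' a t w = traj X a t w.
  by move=> e; apply: traj_ext => r _; rewrite /X' e eqxx /= andbF.
have hX'obs w r al : pre (A w) r = al ->  X' r al w = X r al w.
  move=> <-; rewrite /X'; case: ifP => // /and3P[r0 ne /eqP e].
  by move: ne; rewrite (@pre_eq1 _ _ _ r0 e) eqxx.
pose Y' := fun k (al : k.-tuple nat) w =>
  if [&& val al == val (pre a t), pre (A w) k != al & traj X' a t w == z0]
  then v else Y k al w.
have hY'a w : Y' t (pre a t) w =
    if (pre (A w) t != pre a t) && (traj X' a t w == z0) then v else Y t (pre a t) w.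
  by rewrite /Y' eqxx.
have hobs : obs X' A Y' T t = obs X A Y T t.
  apply/funext => w; rewrite /obs; congr (_, _, _).
    by apply: traj_ext => r _; apply: hX'obs.
  by rewrite /Y' eqxx /= andbF.
have mX' r al : measurable_fun setT (X' r al).
  apply: measurable_fun_ifT; [|exact: measurable_cst|exact: mX].
  apply: measurable_and; first exact: measurable_cst.
  apply: measurable_and; last exact: measurable_cst.
  exact: (@nat_mfun _ _ (fun w => A w 1) (fun n => n != a 1) (mA 1%N)).
have mtraj' : measurable_fun setT (traj X' a t) := @measurable_traj R dims d Omega X' a t mX'.
have mY' k al : measurable_fun setT (Y' k al).
  apply: measurable_fun_ifT; [|exact: measurable_cst|exact: mY].
  apply: measurable_and; first exact: measurable_cst.
  apply: measurable_and.
    apply: mbool.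
    rewrite (_ : [set w | pre (A w) k != al] = ~` [set w | pre (A w) k = al]).
      by apply: measurableC; apply: measurable_pre_eq.
    by apply/seteqP; split => w /=; case: eqP.
  apply: mbool.
  rewrite (_ : [set w | traj X' a t w == z0] = [set w | traj X' a t w = z0]).
    exact: measurable_eqf.
  by apply/seteqP; split => w /=; case: eqP.
have intY' : P.-integrable setT (EFin \o Y' t (pre a t)).
  apply: (@le_integrable _ _ _ P setT measurableT _ (EFin \o (fun w => `|Y t (pre a t) w| + `|v|))).
  - exact: measurableT_comp.
  - move=> w _ /=; rewrite hY'a.
    rewrite lee_fin [X in _ <= X]ger0_norm ?addr_ge0 //.
    case: ifP => _.
      by rewrite lerDr.
    by rewrite lerDl.
  - rewrite (_ : _ \o _ = (abse \o (EFin \o Y t (pre a t))) \+ (EFin \o cst `|v|)).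
      apply: integrableD => //; first exact: integrable_abse.
      exact: finite_measure_integrable_cst.
    by apply/funext => w.
have hbY' : {ae P, forall w, ylo (traj X' a t w) <= Y' t (pre a t) w <= yup (traj X' a t w)}.
  apply: filterS2 hb hc => w hbw hcw.
  rewrite hY'a; case: ifP => [/andP[_ /eqP ->] //| Hc].
  case: (eqVneq (A w 1) (a 1)) => [e|ne].
    by rewrite hX'unmod.
  move: Hc; rewrite hX'mod // eqxx andbT.
  case: eqP => // /(@pre_eq1 _ _ _ t0).
  by move/eqP: ne.
have [h hh] := @cexp_exists _ _ _ P _ _ _ _ mtraj' intY'.
have hsl : same_law P P (obs X A Y T t) (obs X' A Y' T t).
  by move=> B mB; rewrite hobs.
have hg := hperm _ _ P X' A Y' (And3 mX' mA mY') hA hsl hbY' h hh.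
pose E := [set w | traj X' a t w = z0].
have mE : measurable E := @measurable_eqf _ _ _ _ _ z0 mtraj'.
pose N3 := [set w | pre (A w) s = pre a s] `&` [set w | X s (pre a s) w = X s (pre a s) w0].
have mN3 : measurable N3.
  by apply: measurableI; [exact: measurable_pre_eq| exact: measurable_eqf].
have mF := @measurable_obs R dims d Omega X A s (X s (pre a s) w0) mX mA.
have PN3 : P N3 = 0%E.
  apply: (@subset_measure0 _ _ _ P _ _ mN3 mF) (hatom _).
  by move=> w [/= e1 e2]; rewrite e1.
have st : (s <= t)%N by case/andP: hs.
have hae : ae_eq P E (fun w => (Y' t (pre a t) w)%:E) (fun w => v%:E).
  exists N3; split => //.
  move=> w /=; apply: contra_notP => hn Ew.
  rewrite hY'a.
  have -> : (traj X' a t w == z0) by apply/eqP.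
  case: eqP => [ept|_] //=.
  exfalso; apply: hn; split => /=.
    exact: pre_prefix st ept.
  have e1 := @pre_eq1 _ _ _ t0 ept.
  have Ew' : traj X' a t w = z0 := Ew.
  rewrite hX'unmod // in Ew'.
  exact: (@traj_inj _ _ _ _ _ _ _ _ _ _ _ Ew' s st).
have hI : (v%:E * P E = (h z0)%:E * P E)%E.
  case: hh => _ _ _ /(_ [set z0] (@tuple_set1 R _ z0)) hI.
  have e1 : (\int[P]_(w in E) (Y' t (pre a t) w)%:E = \int[P]_(w in E) v%:E)%E.
    apply: ae_eq_integral => //.
    apply: measurable_funTS; apply: measurableT_comp => //; exact: mY'.
  have e2 : (\int[P]_(w in E) (h (traj X' a t w))%:E = \int[P]_(w in E) (h z0)%:E)%E.
    by apply: eq_integral => w; rewrite inE => ->.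
  have e3 r : (\int[P]_(w in E) r%:E = r%:E * P E)%E := integral_cst P mE r%:E.
  by move: hI; rewrite e1 e2 !e3.
have [Nc [mNc PNc sNc]] := hc.
pose S := [set w | A w 1 != a 1].
have mS : measurable S.
  have := (@nat_mfun _ _ (fun w => A w 1) (fun n => n != a 1) (mA 1%N)) measurableT [set true] I.
  by rewrite setTI.
have SE : S `\` Nc `<=` E.
  move=> w [Sw nNc]; apply: hX'mod => //.
  by apply: contrapT => H; apply: nNc; apply: sNc.
have PE0 : (0 < P E)%E.
  apply: (lt_le_trans hA1).
  rewrite (measureDI P mS mNc).
  rewrite (@subset_measure0 _ _ _ P (S `&` Nc) Nc _ mNc _ PNc) ?adde0; last 2 first.
  - exact: measurableI.
  - by move=> w [].
  apply: le_measure => //; rewrite inE //; exact: measurableD.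
have hz : h z0 = v.
  have fE : P E \is a fin_num := fin_num_measure P E mE.
  have e : (v * fine (P E))%:E = (h z0 * fine (P E))%:E by rewrite !EFinM fineK.
  have {}e : v * fine (P E) = h z0 * fine (P E) by case: e.
  have r0 : fine (P E) != 0 by apply: lt0r_neq0; rewrite -lte_fin fineK.
  by apply/esym/(mulIf r0).
have [Ng [mNg PNg sNg]] := hg.
have [w [Ew nNg]] : exists w, E w /\ ~ Ng w.
  apply: contrapT => H.
  have EN : E `<=` Ng.
    by move=> w Ew; apply: contrapT => nN; apply: H; exists w.
  have PE := @subset_measure0 _ _ _ P E Ng mE mNg EN PNg.
  by rewrite PE ltxx in PE0.
have hw : glo (traj X' a t w) <= h (traj X' a t w) <= gup (traj X' a t w).
  by apply: contrapT => nQ; apply: nNg; apply: sNg.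
by move: hw; rewrite Ew hz.
Qed.
End key.

Theorem theorem4p7 (R : realType) (dims : nat -> nat) (T t : nat)
    (Aset : nat -> seq nat) (a : nat -> nat)
    (d : measure_display) (Omega : measurableType d) (P : probability Omega R)
    (X : forall r, r.-tuple nat -> Omega -> (dims r).-tuple R)
    (A : Omega -> nat -> nat) (Y : forall t, t.-tuple nat -> Omega -> R)
    (ylo yup glo gup : (dsum dims t).-tuple R -> R) :
  (1 <= t <= T)%N ->
  (forall r, (1 <= r <= t)%N -> a r \in Aset r) ->
  po_measurable X A Y ->
  actions_in Aset T A ->
  measurable_fun setT ylo -> measurable_fun setT yup ->
  {ae P, forall w, ylo (traj X a t w) <= Y t (pre a t) w <= yup (traj X a t w)} ->
  P.-integrable setT (EFin \o Y t (pre a t)) ->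
  (exists c, {ae P, forall w, X 0%N (pre a 0) w = c}) ->
  (0 < P [set w | (A w 1 != a 1)%N])%E ->
  (exists s, (1 <= s <= t)%N /\
     forall x : (dims s).-tuple R, P [set w | X s (pre (A w) s) w = x] = 0%E) ->
  measurable_fun setT glo -> measurable_fun setT gup ->
  permissible T Aset a P X A Y ylo yup glo gup ->
  {ae P, forall w, glo (traj X a t w) <= ylo (traj X a t w)} /\
  {ae P, forall w, gup (traj X a t w) >= yup (traj X a t w)}.
Proof.
move=> ht ha mXAY hA mylo myup hb intY [c hc] hA1 [s [hs hatom]] mglo mgup hperm.
have K := @key _ _ _ _ _ _ _ _ _ _ _ _ _ _ _ _ ht mXAY hA hb intY c hc hA1 s hs hatom hperm.
split.
- apply: filterS2 hc hb => w hcw /andP[h1 h2].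
  have hv : ylo (traj X a t w) <= ylo (traj X a t w) <= yup (traj X a t w).
    by rewrite lexx (le_trans h1 h2).
  by case/andP: (K w _ hcw hv).
- apply: filterS2 hc hb => w hcw /andP[h1 h2].
  have hv : ylo (traj X a t w) <= yup (traj X a t w) <= yup (traj X a t w).
    by rewrite lexx (le_trans h1 h2).
  by case/andP: (K w _ hcw hv).
Qed.
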